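(* Let $U$ be a Hilbert space, $\widetilde H_{i+1}: U\rightrightarrows U$, and $M_{i+1}, Z_{i+1}\in\mathcal{L}(U;U)$ with $Z_{i+1}M_{i+1}$ self-adjoint, positive definite and invertible. Let $u^i, u^{i+1}\in U$ satisfy $0\in\widetilde H_{i+1}(u^{i+1}) + M_{i+1}(u^{i+1}-u^i)$. Then \[ \tfrac12\|u^{i+1}-u^i\|^2_{Z_{i+1}M_{i+1}} \ge \tfrac12\operatorname{dist}^2_{Z_{i+1}^*(Z_{i+1}M_{i+1})^{-1}Z_{i+1}}\big(0, \widetilde H_{i+1}(u^{i+1})\big). \]
   Context: For $T\in\mathcal{L}(U;U)$: $\|x\|_T^2:=\langle Tx,x\rangle$ and $\operatorname{dist}^2_T(z,A):=\inf_{u\in A}\|z-u\|_T^2$. *)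

(* Defs.v *)
From HB Require Import structures.
From mathcomp Require Import all_boot all_order all_algebra.
From mathcomp Require Import all_classical all_reals all_analysis.
Set Implicit Arguments. Unset Strict Implicit. Unset Printing Implicit Defensive.
Import Order.TTheory GRing.Theory Num.Theory.
Import numFieldNormedType.Exports.
Local Open Scope classical_set_scope.
Local Open Scope ring_scope.

(* A real Hilbert space: a complete normed space whose norm comes from
   the inner product [ip]. *)
Definition is_inner_product (R : realType) (U : completeNormedModType R)
  (ip : U -> U -> R) : Prop :=
  [/\ (forall x y, ip x y = ip y x),
      (forall a x y z, ip (a *: x + y) z = a * ip x z + ip y z)
    & (forall x, ip x x = `|x| ^+ 2)].

(* Elements of L(U;U): bounded (= continuous) linear operators. *)
Definition bounded_linear (R : realType) (U : completeNormedModType R)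
  (T : U -> U) : Prop :=
  (forall a x y, T (a *: x + y) = a *: T x + T y) /\ continuous T.

Definition sqnormT (R : realType) (U : completeNormedModType R)
  (ip : U -> U -> R) (T : U -> U) (x : U) : R := ip (T x) x.

Definition dist2T (R : realType) (U : completeNormedModType R)
  (ip : U -> U -> R) (T : U -> U) (z : U) (A : set U) : R :=
  inf [set sqnormT ip T (z - u) | u in A].

(* Main.v *)
Require Import Defs.
From HB Require Import structures.
From mathcomp Require Import all_boot all_order all_algebra.
From mathcomp Require Import all_classical all_reals all_analysis.
Import Order.TTheory GRing.Theory Num.Theory.
Import numFieldNormedType.Exports.
Local Open Scope classical_set_scope.
Local Open Scope ring_scope.

Theorem lemma3p13 (R : realType) (U : completeNormedModType R)
  (ip : U -> U -> R) (Hip : is_inner_product ip)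
  (Ht : U -> set U) (M Z Zadj W : U -> U)
  (HM : bounded_linear M) (HZ : bounded_linear Z)
  (HZadj_bl : bounded_linear Zadj)
  (HZadj : forall x y, ip (Z x) y = ip x (Zadj y))
  (Hsa : forall x y, ip (Z (M x)) y = ip x (Z (M y)))
  (Hpd : forall x, x != 0 -> 0 < ip (Z (M x)) x)
  (HW : bounded_linear W)
  (HWl : forall x, W (Z (M x)) = x) (HWr : forall x, Z (M (W x)) = x)
  (u0 u1 : U)
  (Hinc : exists2 h, Ht u1 h & h + M (u1 - u0) = 0) :
  2^-1 * sqnormT ip (Z \o M) (u1 - u0) >=
  2^-1 * dist2T ip (Zadj \o W \o Z) 0 (Ht u1).
Proof.
case: Hip => ipC ipL ipN.
have ip0 : forall z, ip 0 z = 0.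
  move=> z; have := ipL 1 0 0 z; rewrite scale1r addr0 mul1r.
  by rewrite -{1}[ip 0 z]addr0 => /addrI.
have ip0r : forall z, ip z 0 = 0 by move=> z; rewrite ipC.
case: Hinc => h hin hE.
set d := u1 - u0.
have hh : 0 - h = M d by apply/eqP; rewrite sub0r eq_sym -addr_eq0 addrC hE.
rewrite ler_pM2l ?invr_gt0 ?ltr0n //.
have key : forall x, 0 <= ip (Zadj (W (Z x))) x.
  move=> x; rewrite ipC -HZadj.
  rewrite -{1}(HWr (Z x)); set v := W (Z x).
  have [->|nz] := eqVneq v 0; first by rewrite ip0r.
  by rewrite le_eqVlt Hpd ?orbT.
have lb : has_lbound [set sqnormT ip (Zadj \o W \o Z) (0 - u) | u in Ht u1].
  by exists 0 => _ [u _ <-]; rewrite /sqnormT /=; apply: key.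
have := ge_inf lb (ex_intro2 _ _ h hin erefl).
rewrite hh /sqnormT /= HWl ipC -HZadj.
by [].
Qed.
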